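(* Let $\mathcal M$ be a special local Moufang set with basis $(0,\infty)$ such that $U_\infty$ is abelian, and let $n\ge1$. If for every unit $x$ and every $1\le k\le n$ the point $x\cdot k$ is a unit, then $U_\infty$ is uniquely $k$-divisible for every $1\le k\le n$, i.e. every $u\in U_\infty$ has a unique $v\in U_\infty$ with $v^k=u$.
   Context: Group actions are right actions; $g^h=h^{-1}gh$. For $(X,\sim)$, $\overline x$ is the class of $x$, $\overline X$ the set of classes, $\mathrm{Sym}(X,\sim)$ the bijections $g$ with $x\sim y\iff xg\sim yg$, $\overline U$ the induced group on $\overline X$. A local Moufang set is $(X,\sim)$ with $|\overline X|>2$ and subgroups $U_x\le\mathrm{Sym}(X,\sim)$ ($x\in X$) with: (LM0) $x\sim y\Rightarrow\overline{U_x}=\overline{U_y}$; (LM1) $U_x$ fixes $x$ and is sharply transitive on $X\setminus\overline x$; (LM1') $\overline{U_x}$ fixes $\overline x$ and is sharply transitive on $\overline X\setminus\{\overline x\}$; (LM2) $U_x^g=U_{xg}$ for all $x$ and all $g\in\langle U_y\rangle$. Fix a basis $(0,\infty)$, $0\not\sim\infty$. For $x\not\sim\infty$: $\alpha_x$ is the unique element of $U_\infty$ with $0\alpha_x=x$, $-x:=0\alpha_x^{-1}$, and $x\cdot k:=0\alpha_x^k$. A unit is $x$ with $x\not\sim0,\infty$; $\mu_x$ is the unique element of $U_0\alpha_xU_0$ interchanging $0$ and $\infty$. $\mathcal M$ is special if $\big(-(x\tau^{-1})\big)\tau=-x$ for all units $x$, where $\tau=\mu_e$ for some (equivalently any) unit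 $e$. *)

(* Defs.v *)
(* Local Moufang sets, with group elements represented as
   functions X -> X acting on the right: the image x g is written (g x),
   and the product g h (first g, then h) is the composition (fun x => h (g x)). *)
From Stdlib Require Import Arith Lia.

Section LM.
Variable X : Type.
Variable sim : X -> X -> Prop.
Variable U : X -> (X -> X) -> Prop.

Definition cancelf (f g : X -> X) : Prop := forall x, g (f x) = x.

Definition bijective_map (f : X -> X) : Prop :=
  exists g, cancelf f g /\ cancelf g f.

Definition in_Sym (f : X -> X) : Prop :=
  bijective_map f /\ (forall x y, sim x y <-> sim (f x) (f y)).

Inductive gen_group : (X -> X) -> Prop :=
  | gen_id : gen_group (fun x => x)
  | gen_U : forall y f, U y f -> gen_group f
  | gen_mul : forall f g, gen_group f -> gen_group g -> gen_group (fun x => g (f x))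
  | gen_inv : forall f g, gen_group f -> cancelf f g -> cancelf g f -> gen_group g.

Record IsLocalMoufangSet : Prop := {
  lm_equiv_refl : forall x, sim x x;
  lm_equiv_sym : forall x y, sim x y -> sim y x;
  lm_equiv_trans : forall x y z, sim x y -> sim y z -> sim x z;
  lm_three_classes : exists a b c, ~ sim a b /\ ~ sim a c /\ ~ sim b c;
  lm_sub_id : forall x, U x (fun y => y);
  lm_sub_mul : forall x f g, U x f -> U x g -> U x (fun y => g (f y));
  lm_sub_inv : forall x f, U x f -> exists g, U x g /\ cancelf f g /\ cancelf g f;
  lm_sub_Sym : forall x f, U x f -> in_Sym f;
  (* (LM0): x ~ y implies the induced groups on X/~ coincide *)
  lm_LM0 : forall x y, sim x y ->
     (forall g, U x g -> exists h, U y h /\ forall w, sim (g w) (h w)) /\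
     (forall h, U y h -> exists g, U x g /\ forall w, sim (g w) (h w));
  lm_LM1_fix : forall x g, U x g -> g x = x;
  lm_LM1_trans : forall x y z, ~ sim y x -> ~ sim z x -> exists g, U x g /\ g y = z;
  lm_LM1_sharp : forall x y g h, ~ sim y x -> U x g -> U x h -> g y = h y -> g = h;
  lm_LM1'_fix : forall x g, U x g -> sim (g x) x;
  lm_LM1'_trans : forall x y z, ~ sim y x -> ~ sim z x ->
     exists g, U x g /\ sim (g y) z;
  lm_LM1'_sharp : forall x y g h, ~ sim y x -> U x g -> U x h ->
     sim (g y) (h y) -> forall w, sim (g w) (h w);
  (* (LM2): U_x^g = U_{xg} for g in <U_y : y>, where h^g = g^-1 h g *)
  lm_LM2 : forall x g ginv, gen_group g -> cancelf g ginv -> cancelf ginv g ->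
     forall h, U x h <-> U (g x) (fun y => g (h (ginv y)))
}.

Section Basis.
Variables zero inf : X.

Definition is_alpha (x : X) (a : X -> X) : Prop := U inf a /\ a zero = x.

(* m = -x = 0 alpha_x^{-1} *)
Definition is_minus (x m : X) : Prop := exists a, is_alpha x a /\ a m = zero.

Definition is_unit (x : X) : Prop := ~ sim x zero /\ ~ sim x inf.

Definition is_mu (x : X) (t : X -> X) : Prop :=
  (exists b c a, U zero b /\ U zero c /\ is_alpha x a /\
     t = (fun y => c (a (b y)))) /\ t zero = inf /\ t inf = zero.

(* special: (-(x tau^-1)) tau = -x for all units x, tau = mu_e *)
Definition is_special : Prop :=
  exists e, is_unit e /\ exists t, is_mu e t /\
    forall x y, is_unit x -> t y = x ->
      forall mx my, is_minus x mx -> is_minus y my -> t my = mx.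
End Basis.

Definition abelian_group (P : (X -> X) -> Prop) : Prop :=
  forall f g, P f -> P g -> (fun y => g (f y)) = (fun y => f (g y)).

Definition uniquely_divisible (P : (X -> X) -> Prop) (k : nat) : Prop :=
  forall u, P u -> exists! v, P v /\ (fun y => Nat.iter k v y) = u.

End LM.

(* Main.v *)
Require Import Defs.
From Stdlib Require Import Arith Lia Classical FunctionalExtensionality.

Lemma iter_ext {A} (f g : A -> A) : (forall y, f y = g y) -> forall k y, Nat.iter k f y = Nat.iter k g y.
Proof. intros H k; induction k; intro y; simpl; auto. rewrite IHk; auto. Qed.

Lemma iter_mul {A} (f : A -> A) p q y : Nat.iter (p * q) f y = Nat.iter p (fun z => Nat.iter q f z) y.
Proof. induction p; simpl; auto. rewrite Nat.iter_add, IHp; auto. Qed.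

Lemma iter_comp {A} (f g : A -> A) : (forall y, f (g y) = g (f y)) ->
  forall k y, Nat.iter k (fun z => f (g z)) y = Nat.iter k f (Nat.iter k g y).
Proof.
  intros H k; induction k; intro y; simpl; auto.
  rewrite IHk. f_equal.
  rewrite <- (Nat.iter_swap_gen _ _ g f f); auto.
Qed.

Lemma iter_cancel {A} (f g : A -> A) : (forall y, f (g y) = y) ->
  forall k y, Nat.iter k f (Nat.iter k g y) = y.
Proof.
  intros H k; induction k; intro y; auto.
  change (Nat.iter (S k) f (g (Nat.iter k g y)) = y). rewrite Nat.iter_succ_r, H. auto.
Qed.

Section Pf.
Variables (X : Type) (sim : X -> X -> Prop) (U : X -> (X -> X) -> Prop).
Hypothesis HLM : IsLocalMoufangSet X sim U.
Variables zero inf : X.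
Hypothesis Hbasis : ~ sim zero inf.
Hypothesis Habel : abelian_group X (U inf).

Notation unit := (is_unit X sim zero inf).

Lemma sym' x y : sim x y -> sim y x. Proof. apply (lm_equiv_sym _ _ _ HLM). Qed.
Lemma trans' x y z : sim x y -> sim y z -> sim x z. Proof. apply (lm_equiv_trans _ _ _ HLM). Qed.
Lemma refl' x : sim x x. Proof. apply (lm_equiv_refl _ _ _ HLM). Qed.

Lemma Usim x f a b : U x f -> (sim a b <-> sim (f a) (f b)).
Proof. intro H. apply (lm_sub_Sym _ _ _ HLM _ _ H). Qed.

Lemma Ufix f : U inf f -> f inf = inf.
Proof. intro H. apply (lm_LM1_fix _ _ _ HLM _ _ H). Qed.

Lemma Usharp g h : U inf g -> U inf h -> g zero = h zero -> g = h.
Proof. intros. eapply (lm_LM1_sharp _ _ _ HLM inf zero); eauto. Qed.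

Lemma Uex p : ~ sim p inf -> exists a, U inf a /\ a zero = p.
Proof. intro H. destruct (lm_LM1_trans _ _ _ HLM inf zero p Hbasis H) as [g [? ?]]; eauto. Qed.

Lemma Uinv x f : U x f -> exists g, U x g /\ (forall y, g (f y) = y) /\ (forall y, f (g y) = y).
Proof. intro H. destruct (lm_sub_inv _ _ _ HLM _ _ H) as [g [? [? ?]]]. exists g; auto. Qed.

Lemma Unotinf f : U inf f -> ~ sim (f zero) inf.
Proof. intros H Hs. apply Hbasis. apply (Usim _ _ zero inf H). rewrite Ufix; auto. Qed.

Lemma Uiter x f : U x f -> forall k, U x (fun y => Nat.iter k f y).
Proof. intros H k; induction k; simpl. apply (lm_sub_id _ _ _ HLM).
  apply (lm_sub_mul _ _ _ HLM x (fun y => Nat.iter k f y) f); auto. Qed.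

Lemma comm f g : U inf f -> U inf g -> forall y, f (g y) = g (f y).
Proof. intros Hf Hg y. pose proof (Habel _ _ Hf Hg) as E.
  exact (eq_sym (f_equal (fun F => F y) E)). Qed.

Lemma triv_class d : U inf d -> sim (d zero) zero -> forall w, sim (d w) w.
Proof. intros Hd Hs w.
  apply (lm_LM1'_sharp _ _ _ HLM inf zero d (fun y => y) Hbasis Hd (lm_sub_id _ _ _ HLM inf) Hs). Qed.

Lemma unit_sim x y : unit x -> sim y x -> unit y.
Proof. intros [H1 H2] H; split; intro; [apply H1|apply H2]; eapply trans'; eauto using sym'. Qed.


Lemma gm f g : gen_group X U f -> gen_group X U g -> gen_group X U (fun x => g (f x)).
Proof. intros. apply (gen_mul X U f g); auto. Qed.

Lemma conj_iter P Pinv : gen_group X U P -> (forall y, Pinv (P y) = y) -> (forall y, P (Pinv y) = y) ->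
  P inf = inf -> P zero = zero -> forall g, U inf g ->
  U inf (fun y => P (g (Pinv y))) /\ forall k, P (Nat.iter k g zero) = Nat.iter k (fun y => P (g (Pinv y))) zero.
Proof.
  intros HP H1 H2 Hi H0 g Hg. split.
  - pose proof (lm_LM2 _ _ _ HLM inf P Pinv HP H1 H2 g) as E. rewrite Hi in E. apply E; auto.
  - intro k. rewrite <- H0 at 2. apply Nat.iter_swap_gen. intro a. rewrite H1. auto.
Qed.

Variables t s : X -> X.
Hypothesis Ht_gen : gen_group X U t.
Hypothesis Hs_gen : gen_group X U s.
Hypothesis Hts : forall y, t (s y) = y.
Hypothesis Hst : forall y, s (t y) = y.
Hypothesis Ht0 : t zero = inf.
Hypothesis Htinf : t inf = zero.
Hypothesis Htsim : forall a b, sim a b <-> sim (t a) (t b).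
Hypothesis Hsp : forall x y, unit x -> t y = x -> forall mx my,
  is_minus X U zero inf x mx -> is_minus X U zero inf y my -> t my = mx.
Variable n : nat.
Hypothesis Hunits : forall x, unit x -> forall a, is_alpha X U zero inf x a ->
     forall k, 1 <= k <= n -> unit (Nat.iter k a zero).

Lemma s0 : s zero = inf. Proof. rewrite <- Htinf; auto. Qed.
Lemma sinf : s inf = zero. Proof. rewrite <- Ht0; auto. Qed.

Lemma t_unit y : unit y -> unit (t y).
Proof. intros [H1 H2]; split; intro H.
  - apply H2. apply Htsim. rewrite Htinf; auto.
  - apply H1. apply Htsim. rewrite Ht0; auto. Qed.

Lemma unit_notinf y : unit y -> ~ sim y inf. Proof. intros [_ H]; auto. Qed.

Lemma K : forall k, 1 <= k <= n -> forall w a, unit w -> U inf a -> a zero = w ->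
  forall bA, U inf bA -> bA zero = t (Nat.iter k a zero) -> Nat.iter k bA zero = t w.
Proof.
  intro k. induction k as [|m IH]; intros Hk w a Hw Ha Haw bA HbA HbA0; [lia|].
  destruct m as [|m'].
  { simpl in *. rewrite HbA0, Haw. auto. }
  set (m := S m') in *.
  assert (IHm : 1 <= m <= n) by lia.
  set (v := Nat.iter m a zero).
  assert (Hv : unit v) by (apply Hunits with (x := w); [auto|split;auto|lia]).
  set (av := fun y => Nat.iter m a y).
  assert (Hav : U inf av) by (apply Uiter; auto).
  destruct (Uinv _ _ Hav) as [avinv [Havinv [Hav1 Hav2]]].
  destruct (Uex (t v)) as [b [Hb Hb0]]. { apply unit_notinf, t_unit; auto. }
  destruct (Uinv _ _ Hb) as [binv [Hbinv [Hb1 Hb2]]].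
  assert (IHw : Nat.iter m b zero = t w) by (apply (IH IHm w a); auto).
  set (P := fun z => s (binv (t (av (s (binv z)))))).
  set (Pinv := fun z => b (t (avinv (s (b (t z)))))).
  assert (HPg : gen_group X U P).
  { apply (gm (fun z => binv (t (av (s (binv z))))) s); auto.
    apply (gm (fun z => t (av (s (binv z)))) binv); [|apply (gen_U _ _ inf); auto].
    apply (gm (fun z => av (s (binv z))) t); auto.
    apply (gm (fun z => s (binv z)) av); [|apply (gen_U _ _ inf); auto].
    apply (gm binv s); auto. apply (gen_U _ _ inf); auto. }
  assert (HP1 : forall y, Pinv (P y) = y).
  { intro y. unfold P, Pinv. rewrite Hts, Hb2, Hst, Hav1, Hts, Hb2. auto. }
  assert (HP2 : forall y, P (Pinv y) = y).
  { intro y. unfold P, Pinv. rewrite Hb1, Hst, Hav2, Hts, Hb1, Hst. auto. }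
  assert (Hspv : s (binv zero) = avinv zero).
  { assert (E : t (avinv zero) = binv zero).
    { apply (Hsp (t v) v); auto. apply t_unit; auto.
      - exists b. split; [split; auto|]. apply Hb2.
      - exists av. split; [split; auto|]. apply Hav2. }
    rewrite <- E. auto. }
  assert (HP0 : P zero = zero).
  { unfold P. rewrite Hspv, Hav2, Ht0, Ufix, sinf; auto. }
  assert (HPi : P inf = inf).
  { unfold P. rewrite Ufix, sinf by auto. change (av zero) with v. rewrite <- Hb0, Hb1, s0. auto. }
  destruct (conj_iter P Pinv HPg HP1 HP2 HPi HP0 b Hb) as [Hg' Hit].
  assert (Eg' : (fun y => P (b (Pinv y))) = avinv).
  { apply Usharp; auto. 
    assert (Pinv zero = zero) by (rewrite <- HP0 at 1; auto).
    rewrite H, Hb0. unfold P. rewrite <- Hb0, Hb1, s0, (Ufix av), Htinf by auto. exact Hspv. }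
  rewrite Eg' in Hit. specialize (Hit (S m)).
  assert (E1 : P (Nat.iter (S m) b zero) = s (binv (t (Nat.iter (S m) a zero)))).
  { unfold P. rewrite (Nat.iter_succ m _ b), Hb1, IHw, Hst. unfold av.
    rewrite (Nat.iter_succ_r m _ a), Haw. auto. }
  rewrite E1, <- HbA0 in Hit.
  assert (Hit2 : binv (bA zero) = t (Nat.iter (S m) avinv zero)) by (rewrite <- Hit; auto).
  set (y := Nat.iter (S m) av zero).
  assert (Hy : unit y).
  { apply Hunits with (x := v); [auto|split;auto|lia]. }
  destruct (Uex (t y)) as [bB [HbB HbB0]]. { apply unit_notinf, t_unit; auto. }
  destruct (Uinv _ _ HbB) as [bBinv [HbBinv [HbB1 HbB2]]].
  assert (Esp : t (Nat.iter (S m) avinv zero) = bBinv zero).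
  { apply (Hsp (t y) y); auto. apply t_unit; auto.
    - exists bB. split; [split; auto|]. apply HbB2.
    - exists (fun z => Nat.iter (S m) av z). split; [split; [apply Uiter; auto| auto]|].
      apply iter_cancel. auto. }
  rewrite Esp in Hit2.
  assert (Hh : (fun z => bB (binv (bA z))) = (fun z => z)).
  { apply Usharp. apply (lm_sub_mul _ _ _ HLM inf (fun z => binv (bA z)) bB); auto.
    apply (lm_sub_mul _ _ _ HLM inf bA binv); auto. apply (lm_sub_id _ _ _ HLM).
    rewrite Hit2. auto. }
  assert (Hh' : forall z, bB (binv (bA z)) = z) by (intro z; exact (f_equal (fun F => F z) Hh)).
  assert (Hbz : forall z, b z = bB (bA z)).
  { intro z. transitivity (b (binv (bB (bA z)))).
    - f_equal. rewrite <- (comm bB binv) by auto. symmetry. apply Hh'.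
    - apply Hb2. }
  assert (HW : unit (Nat.iter (S m) a zero)) by (apply Hunits with (x := w); [auto|split;auto|lia]).
  assert (IH2 : Nat.iter m bB zero = bA zero).
  { rewrite HbA0. apply (IH IHm _ (fun z => Nat.iter (S m) a z)); auto.
    apply Uiter; auto.
    rewrite HbB0. f_equal. unfold y, av. rewrite <- !iter_mul. f_equal. lia. }
  assert (EbA : bA = (fun z => Nat.iter m bB z)).
  { apply Usharp; auto. apply Uiter; auto. }
  rewrite <- IHw.
  rewrite (iter_ext _ _ Hbz). rewrite EbA.
  change (Nat.iter (S m) (fun z => Nat.iter m bB z) zero =
     Nat.iter m (fun z => Nat.iter (S m) bB z) zero).
  rewrite <- !iter_mul. f_equal. lia.
Qed.

Lemma unit_of_t w : unit (t w) -> unit w.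
Proof. intros [H1 H2]; split; intro H; [apply H2|apply H1].
  - rewrite <- Ht0. apply (proj1 (Htsim w zero)); auto.
  - rewrite <- Htinf. apply (proj1 (Htsim w inf)); auto. Qed.

Lemma roots_unit k : 1 <= k <= n -> forall u, U inf u -> unit (u zero) ->
  exists r, U inf r /\ (fun y => Nat.iter k r y) = u.
Proof.
  intros Hk u Hu Hu0.
  assert (Hw : unit (s (u zero))) by (apply unit_of_t; rewrite Hts; auto).
  destruct (Uex (s (u zero))) as [a [Ha Ha0]]. { apply unit_notinf; auto. }
  assert (HA : unit (Nat.iter k a zero)) by (apply Hunits with (x := s (u zero)); [auto|split;auto|lia]).
  destruct (Uex (t (Nat.iter k a zero))) as [bA [HbA HbA0]]. { apply unit_notinf, t_unit; auto. }
  exists bA. split; auto. apply Usharp; auto. apply Uiter; auto.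
  rewrite (K k Hk (s (u zero)) a Hw Ha Ha0 bA HbA HbA0). auto.
Qed.

Lemma inj_unit k : 1 <= k <= n -> forall f g, U inf f -> U inf g -> unit (f zero) -> unit (g zero) ->
  (forall y, Nat.iter k f y = Nat.iter k g y) -> f = g.
Proof.
  intros Hk f g Hf Hg Hf0 Hg0 E.
  assert (HA : unit (Nat.iter k f zero)) by (apply Hunits with (x := f zero); [auto|split;auto|lia]).
  destruct (Uex (t (Nat.iter k f zero))) as [bA [HbA HbA0]]. { apply unit_notinf, t_unit; auto. }
  pose proof (K k Hk (f zero) f Hf0 Hf eq_refl bA HbA HbA0) as E1.
  rewrite E in HbA0.
  pose proof (K k Hk (g zero) g Hg0 Hg eq_refl bA HbA HbA0) as E2.
  apply Usharp; auto. rewrite <- (Hst (f zero)), <- (Hst (g zero)). congruence.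
Qed.

Variable e : X.
Hypothesis He : unit e.

Lemma not_unit_sim p : ~ sim p inf -> ~ unit p -> sim p zero.
Proof. intros H1 H2. apply NNPP. intro H3. apply H2. split; auto. Qed.

Lemma neg_unit ae aeinv : U inf ae -> ae zero = e -> (forall y, ae (aeinv y) = y) -> unit (aeinv zero).
Proof. intros Hae Hae0 H. destruct He as [He1 He2]. split; intro Hs.
  - apply He1. rewrite <- Hae0. apply sym'. rewrite <- (H zero) at 1. exact (proj1 (Usim _ _ (aeinv zero) zero Hae) Hs).
  - apply Hbasis. rewrite <- (H zero). rewrite <- (Ufix ae) by auto. exact (proj1 (Usim _ _ (aeinv zero) inf Hae) Hs).
Qed.

Lemma roots k : 1 <= k <= n -> forall u, U inf u ->
  exists r, U inf r /\ (fun y => Nat.iter k r y) = u.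
Proof.
  intros Hk u Hu.
  destruct (classic (unit (u zero))) as [H|H]. { apply roots_unit; auto. }
  apply not_unit_sim in H; [|apply Unotinf; auto].
  destruct (Uex e) as [ae [Hae Hae0]]. { apply unit_notinf; auto. }
  destruct (Uinv _ _ Hae) as [aeinv [Haeinv [Hae1 Hae2]]].
  assert (Hu1 : U inf (fun y => u (ae y))) by (apply (lm_sub_mul _ _ _ HLM inf ae u); auto).
  destruct (roots_unit k Hk _ Hu1) as [r1 [Hr1 E1]].
  { simpl. rewrite Hae0. apply unit_sim with e; [exact He| apply triv_class; auto]. }
  destruct (roots_unit k Hk _ Haeinv) as [r2 [Hr2 E2]]. { exact (neg_unit ae aeinv Hae Hae0 Hae2). }
  exists (fun y => r1 (r2 y)). split. { apply (lm_sub_mul _ _ _ HLM inf r2 r1); auto. }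
  apply functional_extensionality. intro y.
  rewrite iter_comp by (apply comm; auto).
  rewrite (f_equal (fun F => F (Nat.iter k r2 y)) E1), (f_equal (fun F => F y) E2). simpl.
  rewrite Hae2. auto.
Qed.

Lemma uniq k : 1 <= k <= n -> forall v v', U inf v -> U inf v' ->
  (forall y, Nat.iter k v y = Nat.iter k v' y) -> v = v'.
Proof.
  intros Hk v v' Hv Hv' E.
  destruct (Uinv _ _ Hv') as [vi [Hvi [Hv1 Hv2]]].
  set (d := fun y => vi (v y)).
  assert (Hd : U inf d) by (apply (lm_sub_mul _ _ _ HLM inf v vi); auto).
  assert (Ed : forall y, Nat.iter k d y = y).
  { intro y. unfold d. rewrite iter_comp by (apply comm; auto). rewrite E. apply iter_cancel. auto. }
  assert (Hdid : forall z, d z = z).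
  { destruct (classic (unit (d zero))) as [H|H].
    - exfalso. assert (Hu : unit (Nat.iter k d zero)) by (apply Hunits with (x := d zero); [auto|split;auto|lia]).
      rewrite Ed in Hu. destruct Hu as [Hu _]. apply Hu, refl'.
    - apply not_unit_sim in H; [|apply Unotinf; auto].
      destruct (Uex e) as [ae [Hae Hae0]]. { apply unit_notinf; auto. }
      destruct (Uinv _ _ Hae) as [aeinv [Haeinv [Hae1 Hae2]]].
      assert (Hf : U inf (fun y => d (ae y))) by (apply (lm_sub_mul _ _ _ HLM inf ae d); auto).
      assert (Efg : (fun y => d (ae y)) = ae).
      { apply (inj_unit k Hk); auto.
        - simpl. rewrite Hae0. apply unit_sim with e; [exact He| apply triv_class; auto].
        - rewrite Hae0; auto.
        - intro y. rewrite iter_comp by (apply comm; auto). rewrite Ed. auto. }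
      intro z. rewrite <- (Hae2 z). exact (f_equal (fun F => F (aeinv z)) Efg). }
  apply functional_extensionality. intro y.
  rewrite <- (Hv2 (v y)). fold (d y). rewrite Hdid. auto.
Qed.

End Pf.

Theorem mainTheorem15 (X : Type) (sim : X -> X -> Prop) (U : X -> (X -> X) -> Prop)
  (HLM : IsLocalMoufangSet X sim U) (zero inf : X) (Hbasis : ~ sim zero inf)
  (Hspecial : is_special X sim U zero inf)
  (Habel : abelian_group X (U inf))
  (n : nat) (Hn : 1 <= n)
  (Hunits : forall x, is_unit X sim zero inf x ->
     forall a, is_alpha X U zero inf x a ->
     forall k, 1 <= k <= n -> is_unit X sim zero inf (Nat.iter k a zero)) :
  forall k, 1 <= k <= n -> uniquely_divisible X (U inf) k.
Proof.
  destruct Hspecial as [e [He [t [[[b [c [a [Hb [Hc [[Ha Ha0] Et]]]]]] [Ht0 Htinf]] Hsp]]]].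
  destruct (lm_sub_inv _ _ _ HLM _ _ Hb) as [bi [Hbi [Hb1 Hb2]]].
  destruct (lm_sub_inv _ _ _ HLM _ _ Hc) as [ci [Hci [Hc1 Hc2]]].
  destruct (lm_sub_inv _ _ _ HLM _ _ Ha) as [ai [Hai [Ha1 Ha2]]].
  set (s := fun y => bi (ai (ci y))).
  assert (Ht_gen : gen_group X U t).
  { rewrite Et. apply (gm X U (fun y => a (b y)) c); [|apply (gen_U _ _ zero); auto].
    apply (gm X U b a); [apply (gen_U _ _ zero)|apply (gen_U _ _ inf)]; auto. }
  assert (Hs_gen : gen_group X U s).
  { apply (gm X U (fun y => ai (ci y)) bi); [|apply (gen_U _ _ zero); auto].
    apply (gm X U ci ai); [apply (gen_U _ _ zero)|apply (gen_U _ _ inf)]; auto. }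
  assert (Hts : forall y, t (s y) = y).
  { intro y. rewrite Et. unfold s. rewrite Hb2, Ha2, Hc2. auto. }
  assert (Hst : forall y, s (t y) = y).
  { intro y. rewrite Et. unfold s. rewrite Hc1, Ha1, Hb1. auto. }
  assert (Htsim : forall x y, sim x y <-> sim (t x) (t y)).
  { intros x y. rewrite Et.
    rewrite (Usim X sim U HLM _ _ x y Hb), (Usim X sim U HLM _ _ (b x) (b y) Ha),
            (Usim X sim U HLM _ _ (a (b x)) (a (b y)) Hc). tauto. }
  intros k Hk u Hu.
  destruct (roots X sim U HLM zero inf Hbasis Habel t s Ht_gen Hs_gen Hts Hst Ht0 Htinf
              Htsim Hsp n Hunits e He k Hk u Hu) as [r [Hr Er]].
  exists r. split; [split; auto|].
  intros v' [Hv' Ev'].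
  apply (uniq X sim U HLM zero inf Hbasis Habel t s Ht_gen Hs_gen Hts Hst Ht0 Htinf
              Htsim Hsp n Hunits e He k Hk r v' Hr Hv').
  intro y. rewrite <- Ev' in Er. exact (f_equal (fun F => F y) Er).
Qed.
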